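(* For every CEA $\mathcal{A}$ and every $\mathrm{SEL}\in\{\mathrm{STRICT},\mathrm{NEXT},\mathrm{LAST},\mathrm{MAX}\}$ there is a CEA $\mathcal{A}_{\mathrm{SEL}}$ such that $[\![\mathcal{A}_{\mathrm{SEL}}]\!](S)=[\![\mathrm{SEL}(\mathcal{A})]\!](S)$ for every stream $S$. Moreover, $\mathcal{A}_{\mathrm{STRICT}}$ has at most twice as many states and transitions as $\mathcal{A}$, and $\mathcal{A}_{\mathrm{NEXT}},\mathcal{A}_{\mathrm{LAST}},\mathcal{A}_{\mathrm{MAX}}$ have size at most exponential in $|\mathcal{A}|$.
   Context: Fix a schema $\mathcal{R}$ and let $\mathrm{tuples}(\mathcal{R})$ be the set of all its tuples. A stream is an infinite sequence $S=t_0t_1\ldots$ of tuples. A complex event is a non-empty finite subset of $\mathbb{N}$. Fix a set $\mathbf{U}$ of unary predicates (subsets of $\mathrm{tuples}(\mathcal{R})$), closed under union, intersection and complement, and containing $\mathrm{TRUE}=\mathrm{tuples}(\mathcal{R})$. A complex event automaton (CEA) is $\mathcal{A}=(Q,\Delta,I,F)$ with $Q$ a finite set of states, $I,F\subseteq Q$, and $\Delta\subseteq Q\times(\mathbf{U}\times\{\bullet,\circ\})\times Q$ finite. A run of $\mathcal{A}$ over $S$ reading $t_0\ldots t_n$ is $q_0\xrightarrow{P_0/m_0}q_1\cdots\xrightarrow{P_n/m_n}q_{n+1}$ with $q_0\in I$, $(q_i,(P_i,m_i),q_{i+1})\in\Delta$ and $t_i\in P_i$; accepting if $q_{n+1}\in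 F$. $\mathrm{match}(\rho)=\{i : m_i=\bullet\}$. $[\![\mathcal{A}]\!]_n(S)$ is the set of $\mathrm{match}(\rho)$ for accepting runs $\rho$ reading $t_0\ldots t_n$ with $n\in\mathrm{match}(\rho)$, and $[\![\mathcal{A}]\!](S)=\bigcup_n[\![\mathcal{A}]\!]_n(S)$. $|\mathcal{A}|=|Q|+|\Delta|$. Orders: $C_1\leq_{\mathrm{next}}C_2$ iff $C_1=C_2$ or $\min(C_1\triangle C_2)\in C_2$; $C_1\leq_{\mathrm{last}}C_2$ iff $C_1=C_2$ or $\max(C_1\triangle C_2)\in C_2$ ($\triangle$ = symmetric difference). Selection strategies: $C\in[\![\mathrm{STRICT}(\mathcal{A})]\!](S)$ iff $C\in[\![\mathcal{A}]\!](S)$ and $C$ is an interval $\{i,i+1,\dots,j\}$ of consecutive integers. $C\in[\![\mathrm{NEXT}(\mathcal{A})]\!](S)$ iff $C\in[\![\mathcal{A}]\!](S)$ and $C'\leq_{\mathrm{next}}C$ for every $C'\in[\![\mathcal{A}]\!](S)$ with $\max(C')=\max(C)$. $C\in[\![\mathrm{LAST}(\mathcal{A})]\!](S)$ iff $C\in[\![\mathcal{A}]\!](S)$ and $C'\leq_{\mathrm{last}}C$ for every $C'\in[\![\mathcal{A}]\!](S)$ with $\max(C')=\max(C)$. $C\in[\![\mathrm{MAX}(\mathcal{A})]\!](S)$ iff $C\in[\![\mathcal{A}]\!](S)$ and there is no $C'\in[\![\mathcal{A}]\!](S)$ with $\max(C')=\max(C)$ and $C\subsetneq C'$. *)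

(* Defs.v *)
From Stdlib Require Import List.
From mathcomp Require Import all_boot.
Set Implicit Arguments. Unset Strict Implicit. Unset Printing Implicit Defensive.

(* Tuples of the schema: an arbitrary type [T]. *)

Definition pred_class_ok (T : Type) (U : (T -> bool) -> Prop) : Prop :=
  [/\ (forall p q, U p -> U q -> U (fun t => p t || q t)),
      (forall p q, U p -> U q -> U (fun t => p t && q t)),
      (forall p, U p -> U (fun t => ~~ p t)) &
      U (fun _ => true)].

(* A complex event automaton.  Marks: [true] = bullet (mark), [false] = circ.
   The finite transition set Delta is given as a duplicate-free list. *)
Record CEA (T : Type) := MkCEA {
  st : finType;
  delta : list (st * (T -> bool) * bool * st);
  init : {set st};
  fin : {set st} }.

Definition wf_cea (T : Type) (U : (T -> bool) -> Prop) (A : CEA T) : Prop :=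
  NoDup (delta A) /\ forall q P m q', In (q, P, m, q') (delta A) -> U P.

Definition cea_size (T : Type) (A : CEA T) : nat := #|st A| + size (delta A).

Definition stream (T : Type) := nat -> T.

(* A complex event is represented by its characteristic function
   [C : nat -> bool]; the events produced below are automatically finite and
   non-empty. *)
Definition cevent := nat -> bool.

Definition acc_run (T : Type) (A : CEA T) (S : stream T) (n : nat)
  (q : nat -> st A) (P : nat -> T -> bool) (m : nat -> bool) : Prop :=
  [/\ q 0 \in init A,
      (forall i, i <= n -> In (q i, P i, m i, q i.+1) (delta A) /\ P i (S i)) &
      q n.+1 \in fin A].
Arguments acc_run {T} A S n q P m.

Definition sem_n (T : Type) (A : CEA T) (S : stream T) (n : nat) (C : cevent) : Prop :=
  exists q P m, acc_run A S n q P m /\ m n = true /\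
                (forall i, C i = (i <= n) && m i).

Definition sem (T : Type) (A : CEA T) (S : stream T) (C : cevent) : Prop :=
  exists n, sem_n A S n C.

Definition is_max (C : cevent) (n : nat) : Prop :=
  C n /\ forall j, C j -> j <= n.

Definition le_next (C1 C2 : cevent) : Prop :=
  (forall i, C1 i = C2 i) \/
  exists i, [/\ C1 i <> C2 i, (forall j, j < i -> C1 j = C2 j) & C2 i].

Definition le_last (C1 C2 : cevent) : Prop :=
  (forall i, C1 i = C2 i) \/
  exists i, [/\ C1 i <> C2 i, (forall j, i < j -> C1 j = C2 j) & C2 i].

Inductive selection := STRICT | NEXT | LAST | MAX.

Definition sel_sem (T : Type) (sel : selection) (A : CEA T) (S : stream T)
  (C : cevent) : Prop :=
  sem A S C /\
  match sel with
  | STRICT => exists i j, forall k, C k <-> (i <= k <= j)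
  | NEXT => forall C' n, sem A S C' -> is_max C' n -> is_max C n -> le_next C' C
  | LAST => forall C' n, sem A S C' -> is_max C' n -> is_max C n -> le_last C' C
  | MAX => ~ exists C' n, [/\ sem A S C', is_max C' n, is_max C n,
                            (forall i, C i -> C' i) & exists i, C' i /\ ~~ C i]
  end.

(* Main.v *)
Require Import Defs.
From Stdlib Require Import List Classical.
From mathcomp Require Import all_boot zify.
Set Implicit Arguments. Unset Strict Implicit. Unset Printing Implicit Defensive.


Lemma card_setT (T : finType) : #|{set T}| = 2 ^ #|T|.
Proof. transitivity #|powerset [set: T]|; last by rewrite card_powerset cardsT.
rewrite -cardsT; apply: eq_card => A; by rewrite powersetE subsetT inE. Qed.

Lemma dedup_ex (X : Type) (l : list X) :
  exists l', NoDup l' /\ (forall x, In x l' <-> In x l) /\ size l' <= size l.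
Proof.
elim: l => [|a l [l' [H1 [H2 H3]]]].
  by exists nil; split; [constructor| split].
case: (classic (In a l')) => Ha.
  exists l'; split=> //; split; last by apply: leqW.
  move=> x; split; first by move/H2 => ?; right.
  by case=> [<-|/H2].
exists (a :: l'); split; first by constructor.
split=> //= x; split; case=> [->|/H2]; auto.
Qed.

Lemma In_nthP (X : Type) (l : list X) x : In x l -> exists k, k < size l /\ nth x l k = x.
Proof.
elim: l => [|a l IH] //= [->|/IH [k [Hk Hn]]]; first by exists 0.
by exists k.+1.
Qed.

Lemma nth_In' (X : Type) (l : list X) x0 k : k < size l -> In (nth x0 l k) l.
Proof.
elim: l k => [|a l IH] [|k] //= Hk; [by left | right; exact: IH].
Qed.

Lemma In_of_mem (T : eqType) (x : T) s : x \in s -> In x s.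
Proof. elim: s => [|a s IH] //=; rewrite inE => /orP [/eqP ->|/IH]; auto. Qed.

Lemma In_enum (T : finType) (x : T) : In x (enum T).
Proof. apply: In_of_mem; by rewrite mem_enum. Qed.

Lemma size_app' (X : Type) (a b : list X) : size (a ++ b)%list = size a + size b.
Proof. by elim: a => //= x a ->. Qed.

Lemma size_flat_map (X Y : Type) (f : X -> list Y) l b :
  (forall x, size (f x) <= b) -> size (flat_map f l) <= size l * b.
Proof.
move=> Hb; elim: l => //= x l IH; rewrite size_app' mulSn; exact: leq_add.
Qed.

Definition lastm (mm : nat -> bool) (j : nat) := if j is j'.+1 then mm j' else false.

Definition Status := (bool * bool)%type.

Section Gen.
Variable T : Type.
Variable A : CEA T.
Local Notation Q := (st A).
Local Notation N := (size (delta A)).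
Definition trn (k : 'I_N) := tnth (in_tuple (delta A)) k.
Definition src k := (trn k).1.1.1.
Definition prd k := (trn k).1.1.2.
Definition mrk k := (trn k).1.2.
Definition tgt k := (trn k).2.

Lemma trn_In k : In (src k, prd k, mrk k, tgt k) (delta A).
Proof.
rewrite /src /prd /mrk /tgt -!surjective_pairing /trn (tnth_nth (trn k)) /=.
exact: nth_In'.
Qed.

Lemma In_trn x : In x (delta A) -> exists k, trn k = x.
Proof.
move=> H; have [k [Hk Hn]] := In_nthP H; exists (Ordinal Hk).
by rewrite /trn (tnth_nth x).
Qed.

Lemma In_trn4 q P m q' : In (q, P, m, q') (delta A) ->
  exists k, [/\ src k = q, prd k = P, mrk k = m & tgt k = q'].
Proof. by move=> /In_trn [k Hk]; exists k; rewrite /src /prd /mrk /tgt Hk. Qed.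

Variables (upd : Status -> bool -> bool -> Status) (s0 : Status) (win : Status -> bool).

Fixpoint stat (a b : nat -> bool) (k : nat) : Status :=
  if k is k'.+1 then upd (stat a b k') (a k') (b k') else s0.

Lemma stat_ext a b a' b' k : (forall i, i < k -> a i = a' i) -> (forall i, i < k -> b i = b' i) ->
  stat a b k = stat a' b' k.
Proof.
elim: k => //= k IH Ha Hb; rewrite IH ?Ha ?Hb // => i Hi; [apply: Ha|apply: Hb]; exact: ltnW.
Qed.

Definition Elem : finType := (Q * Status * bool)%type.
Definition St' : finType := (Q * bool * {set Elem})%type.

Definition R0 : {set Elem} := [set y : Elem | (y.1.1 \in init A) && (y.1.2 == s0) && (y.2 == false)].
Definition alpha (t : T) : {ffun 'I_N -> bool} := [ffun k => prd k t].
Definition step (R : {set Elem}) (al : {ffun 'I_N -> bool}) (b : bool) : {set Elem} :=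
  [set y : Elem | [exists z in R, exists k : 'I_N,
     [&& al k, src k == z.1.1 & y == (tgt k, upd z.1.2 (mrk k) b, mrk k)]]].

Definition lit (al : {ffun 'I_N -> bool}) k : T -> bool :=
  if al k then prd k else fun t => ~~ prd k t.
Definition mt (al : {ffun 'I_N -> bool}) : T -> bool :=
  foldr (fun k acc => fun t => acc t && lit al k t) (fun _ => true) (enum 'I_N).

Lemma mtP al t : mt al t = (al == alpha t).
Proof.
have -> : mt al t = all (fun k => al k == prd k t) (enum 'I_N).
  rewrite /mt; elim: (enum 'I_N) => //= k s ->; rewrite andbC /lit.
  by case: (al k); case: (prd k t).
apply/allP/eqP => [H|->k _]; last by rewrite ffunE.
apply/ffunP => k; rewrite ffunE; apply/eqP/H; exact: mem_enum.
Qed.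

Lemma mtU (U : (T -> bool) -> Prop) : pred_class_ok U -> wf_cea U A -> forall al, U (mt al).
Proof.
case=> HO HA HN HT [_ Hw] al; rewrite /mt; elim: (enum 'I_N) => //= k s IH.
apply: HA => //; rewrite /lit; case: (al k).
  exact: (Hw _ _ _ _ (trn_In k)).
apply: HN; exact: (Hw _ _ _ _ (trn_In k)).
Qed.

Definition dl : list (St' * (T -> bool) * bool * St') :=
  flat_map (fun s : St' => flat_map (fun k : 'I_N => flat_map (fun al : {ffun 'I_N -> bool} =>
    if (src k == s.1.1) && al k then (s, mt al, mrk k, (tgt k, mrk k, step s.2 al (mrk k))) :: nil
    else nil) (enum {ffun 'I_N -> bool})) (enum 'I_N)) (enum St').

Lemma dl_In x : In x dl <-> exists (s : St') (k : 'I_N) (al : {ffun 'I_N -> bool}),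
   [/\ src k = s.1.1, al k & x = (s, mt al, mrk k, (tgt k, mrk k, step s.2 al (mrk k)))].
Proof.
rewrite /dl; split.
  move=> /in_flat_map [s [_ /in_flat_map [k [_ /in_flat_map [al [_]]]]]].
  case: ifP => // /andP [/eqP H1 H2] [<-|//]; by exists s, k, al.
move=> [s [k [al [H1 H2 ->]]]].
apply/in_flat_map; exists s; split; first exact: In_enum.
apply/in_flat_map; exists k; split; first exact: In_enum.
apply/in_flat_map; exists al; split; first exact: In_enum.
by rewrite H1 eqxx H2; left.
Qed.

Lemma size_dl : size dl <= #|St'| * N * 2 ^ N.
Proof.
rewrite /dl -mulnA cardE; apply: size_flat_map => s.
apply: leq_trans (@size_flat_map _ _ _ _ (2 ^ N) _) _; last by rewrite size_enum_ord.
move=> k; apply: leq_trans (@size_flat_map _ _ _ _ 1 _) _.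
  move=> al; by case: ifP.
by rewrite muln1 -cardE card_ffun card_bool card_ord.
Qed.


Definition Init' : {set St'} := [set x : St' | [&& x.1.1 \in init A, x.1.2 == false & x.2 == R0]].
Definition Fin' : {set St'} := [set x : St' | [&& x.1.1 \in fin A, x.1.2 &
   [forall y : Elem, (y \in x.2) ==> ~~ [&& y.1.1 \in fin A, win y.1.2 & y.2]]]].
Definition Agen (l : list (St' * (T -> bool) * bool * St')) : CEA T := @MkCEA T St' l Init' Fin'.

Definition prun (S : stream T) j (qq : nat -> Q) (PP : nat -> T -> bool) (mm : nat -> bool) :=
  qq 0 \in init A /\ forall i, i < j -> In (qq i, PP i, mm i, qq i.+1) (delta A) /\ PP i (S i).

Fixpoint Rseq (S : stream T) (M : nat -> bool) i : {set Elem} :=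
  if i is i'.+1 then step (Rseq S M i') (alpha (S i')) (M i') else R0.

Lemma R_inv (S : stream T) (M : nat -> bool) (R : nat -> {set Elem}) J :
  R 0 = R0 -> (forall i, i < J -> R i.+1 = step (R i) (alpha (S i)) (M i)) ->
  forall j, j <= J -> forall y, y \in R j <->
    exists qq PP mm, prun S j qq PP mm /\ y = (qq j, stat mm M j, lastm mm j).
Proof.
move=> H0 HS; elim=> [_|j IH Hj] y.
- rewrite H0 inE; split.
  + case: y => [[q s] b] /= /andP [/andP [Hq /eqP ->] /eqP ->].
    by exists (fun _ => q), (fun _ _ => true), (fun _ => false).
  + move=> [qq [PP [mm [[Hq _] ->]]]] /=; by rewrite Hq !eqxx.
- rewrite HS // inE; split.
  + move=> /existsP [z /andP [Hz /existsP [k /and3P [Hal /eqP Hsrc /eqP ->]]]].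
    have [qq [PP [mm [[Hq0 Hr] Hzeq]]]] := (IH (ltnW Hj) z).1 Hz.
    exists (fun i => if i <= j then qq i else tgt k),
           (fun i => if i < j then PP i else prd k),
           (fun i => if i < j then mm i else mrk k); split.
    * split=> // i Hi.
      case: (ltngtP i j) => [Hij | Hji | ->].
      -- exact: Hr.
      -- by move: Hi; rewrite ltnS leqNgt Hji.
      -- have -> : qq j = src k by rewrite Hsrc Hzeq.
         split; [exact: trn_In | by move: Hal; rewrite ffunE].
    * rewrite ltnn /= ltnn; congr (_, _, _); congr upd.
      rewrite Hzeq /=; apply: stat_ext => // i Hi; by rewrite Hi.
  + move=> [qq [PP [mm [[Hq0 Hr] ->]]]].
    apply/existsP; exists (qq j, stat mm M j, lastm mm j); apply/andP; split.
      apply/(IH (ltnW Hj)); exists qq, PP, mm; split=> //; split=> // i Hi.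
      apply: Hr; exact: ltnW.
    have [Hin HP] := Hr j (ltnSn j).
    have [k [H1 H2 H3 H4]] := In_trn4 Hin.
    apply/existsP; exists k; by rewrite /alpha ffunE H2 HP H1 eqxx /= H4 H3 eqxx.
Qed.

Lemma is_max_uniq C n n' : is_max C n -> is_max C n' -> n = n'.
Proof. move=> [H1 H2] [H3 H4]; apply/anti_leq; rewrite H2 // H4 //. Qed.

Lemma sem_n_max (B : CEA T) S n C : sem_n B S n C -> is_max C n.
Proof.
move=> [q [P [m [_ [Hm HC]]]]]; split; first by rewrite HC leqnn Hm.
by move=> j; rewrite HC => /andP [].
Qed.

Lemma Agen_sem l (Hl : forall x, In x l <-> In x dl) S C :
  sem (Agen l) S C <-> sem A S C /\
    ~ (exists C' n, [/\ sem A S C', is_max C' n, is_max C n & win (stat C' C n.+1)]).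
Proof.
split.
- move=> [n [q' [P' [m' [[Hi Hr Hf] [Hmn HC]]]]]].
  have Hst i : i <= n -> exists k, [/\ src k = (q' i).1.1, alpha (S i) k, mrk k = m' i &
       q' i.+1 = (tgt k, mrk k, step (q' i).2 (alpha (S i)) (mrk k))].
    move=> Hin; have [Hin' HP] := Hr i Hin.
    move/Hl/dl_In: Hin' => [s [k [al [H1 H2 Heq]]]].
    case: Heq => Hs HPe Hm Hq.
    move: HP; rewrite HPe mtP => /eqP Hal; subst al.
    by exists k; rewrite Hs; split.
  pose PA i := match [pick k | [&& src k == (q' i).1.1, alpha (S i) k, mrk k == m' i &
                tgt k == (q' i.+1).1.1]] with Some k => prd k | None => fun _ => false end.
  have HPA i : i <= n -> In ((q' i).1.1, PA i, m' i, (q' i.+1).1.1) (delta A) /\ PA i (S i).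
    move=> Hin; rewrite /PA; case: pickP => [k /and4P [/eqP a b /eqP c /eqP d] | Hn].
      rewrite -a -c -d; split; [exact: trn_In | by move: b; rewrite /alpha ffunE].
    have [k [H1 H2 H3 H4]] := Hst i Hin.
    by move: (Hn k); rewrite H1 H2 H3 H4 !eqxx.
  move: Hi Hf; rewrite !inE => /and3P [Hi0 _ /eqP HR0] /and3P [Hfa Hfb Hfc].
  have HsnA : sem_n A S n C.
    exists (fun i => (q' i).1.1), PA, m'; split=> //; split=> //.
  split; first by exists n.
  move=> [C' [n0 [[n1 HsC'] Hmx' Hmx Hw]]].
  have E0 := is_max_uniq (sem_n_max HsnA) Hmx; subst n0.
  have E1 := is_max_uniq (sem_n_max HsC') Hmx'; subst n1.
  move: HsC' => [q2 [P2 [m2 [[Hi2 Hr2 Hf2] [Hm2 HC2]]]]].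
  have HRS i : i < n.+1 -> (q' i.+1).2 = step (q' i).2 (alpha (S i)) (m' i).
    move=> Hin; have [k [H1 H2 H3 H4]] := Hst i Hin; by rewrite H4 H3.
  have Hy := (@R_inv S m' (fun i => (q' i).2) n.+1 HR0 HRS n.+1 (leqnn _)
               (q2 n.+1, stat m2 m' n.+1, lastm m2 n.+1)).2.
  have Hy' : (q2 n.+1, stat m2 m' n.+1, lastm m2 n.+1) \in (q' n.+1).2.
    apply: Hy; exists q2, P2, m2; split=> //; split=> // i Hi; exact: Hr2.
  move/forallP: Hfc => /(_ (q2 n.+1, stat m2 m' n.+1, lastm m2 n.+1)) /implyP /(_ Hy').
  move=> /negP; apply; apply/and3P; split; [exact: Hf2 | | exact: Hm2].
  change (win (stat m2 m' n.+1)).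
  have -> : stat m2 m' n.+1 = stat C' C n.+1.
    by apply: stat_ext => i; rewrite ltnS => Hi; rewrite ?HC2 ?HC Hi.
  exact: Hw.
- move=> [[n [qA [PA [mA [[Hi Hr Hf] [Hmn HC]]]]]] Hnb].
  have HsnA : sem_n A S n C by exists qA, PA, mA.
  exists n, (fun i => (qA i, lastm mA i, Rseq S mA i)), (fun i => mt (alpha (S i))), mA.
  split; last by split.
  split.
  + by rewrite inE Hi !eqxx.
  + move=> i Hin; have [Hin' HP] := Hr i Hin; have [k [H1 H2 H3 H4]] := In_trn4 Hin'.
    split; last by rewrite mtP eqxx.
    apply/Hl/dl_In; exists (qA i, lastm mA i, Rseq S mA i), k, (alpha (S i)); split => //.
      by rewrite /alpha ffunE H2.
    by rewrite H3 H4.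
  + rewrite inE; apply/and3P; split; [exact: Hf | exact: Hmn | ].
    apply/forallP => y; apply/implyP => Hy.
    apply/negP => /and3P [Hyf Hyw Hyb]; apply: Hnb.
    have [qq [PP [mm [[Hq0 Hrr] Hy']]]] :=
      (@R_inv S mA (Rseq S mA) n.+1 erefl (fun i _ => erefl) n.+1 (leqnn _) y).1 Hy.
    subst y. have Hyb' : mm n := Hyb. have Hyf' : qq n.+1 \in fin A := Hyf.
    exists (fun i => (i <= n) && mm i), n; split.
    * exists n, qq, PP, mm; split; [split=>//| split=> //].
    * split; [by rewrite leqnn Hyb' | by move=> j /andP []].
    * exact: sem_n_max HsnA.
    * move: Hyw; change (win (stat mm mA n.+1) -> win (stat (fun i => (i <= n) && mm i) C n.+1)).
      congr (is_true (win _)); apply: stat_ext => i; rewrite ltnS => Hii.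
        by rewrite Hii.
      by rewrite HC Hii.
Qed.

End Gen.



Definition updN (s : Status) (a b : bool) : Status := if s.1 then s else (a != b, a && ~~ b).
Definition updL (s : Status) (a b : bool) : Status := if a != b then (true, a && ~~ b) else s.
Definition updM (s : Status) (a b : bool) : Status := (s.1 || (b && ~~ a), s.2 || (a && ~~ b)).
Definition s00 : Status := (false, false).
Definition winN (s : Status) := s.1 && s.2.
Definition winM (s : Status) := ~~ s.1 && s.2.

Lemma max_zero C n : is_max C n -> forall j, n < j -> C j = false.
Proof. move=> [_ H] j Hj; apply/negbTE/negP => /H; by rewrite leqNgt Hj. Qed.

Lemma statN a b k :
  ((stat updN s00 a b k).1 = false <-> forall i, i < k -> a i = b i) /\
  ((stat updN s00 a b k).1 = true -> exists i, [/\ i < k, a i != b i,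
      (forall j, j < i -> a j = b j) & (stat updN s00 a b k).2 = a i]).
Proof.
elim: k => [|k [IH1 IH2]] /=; first by split=> //; split.
rewrite /updN; case E: (stat updN s00 a b k).1; rewrite /= ?E.
- split; first split=> // H.
    have : (stat updN s00 a b k).1 = false by apply/IH1 => i Hi; apply: H; exact: ltnW.
    by rewrite E.
  move=> _; have [i [Hi Hd Hb Hs]] := IH2 E; exists i; split => //; exact: ltnW.
- have Heq := IH1.1 E; split.
    split.
      move/negbFE/eqP => Hk i; rewrite ltnS leq_eqVlt => /orP [/eqP -> //| /Heq //].
    move=> H; apply/negbTE; rewrite negbK; apply/eqP; apply: H; exact: ltnSn.
  move=> Hk; exists k; split => //; move: Hk; by case: (a k); case: (b k).
Qed.

Lemma selN C' C n : is_max C' n -> is_max C n ->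
  (le_next C' C <-> ~~ winN (stat updN s00 C' C n.+1)).
Proof.
move=> H1 H2; have Z1 := max_zero H1; have Z2 := max_zero H2.
have [S1 S2] := statN C' C n.+1.
rewrite /winN; split.
- case=> [Heq | [i [Hd Hb Hi]]].
    have -> : (stat updN s00 C' C n.+1).1 = false by apply/S1 => i _; exact: Heq.
    done.
  case E: (stat updN s00 C' C n.+1).1 => //=.
  have [i0 [Hi0 Hd0 Hb0 ->]] := S2 E.
  have Ei : i0 = i.
    case: (ltngtP i0 i) => // H; first by move: Hd0; rewrite Hb // eqxx.
    by move: Hd; rewrite Hb0.
  subst; move: Hd Hi; by case: (C' i); case: (C i).
- case E: (stat updN s00 C' C n.+1).1 => /= H.
    have [i0 [Hi0 Hd0 Hb0 Hs]] := S2 E.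
    right; exists i0; split; [exact/eqP | exact: Hb0 |].
    rewrite Hs in H; move: Hd0 H; by case: (C' i0); case: (C i0).
  left => i; case: (leqP i n) => Hin; first exact: (S1.1 E i Hin).
  by rewrite Z1 // Z2.
Qed.

Lemma statL a b k :
  ((stat updL s00 a b k).1 = false <-> forall i, i < k -> a i = b i) /\
  ((stat updL s00 a b k).1 = true -> exists i, [/\ i < k, a i != b i,
      (forall j, i < j -> j < k -> a j = b j) & (stat updL s00 a b k).2 = a i]).
Proof.
elim: k => [|k [IH1 IH2]] /=; first by split=> //; split.
rewrite /updL; case Ek: (a k != b k) => /=.
- split; first split=> // H.
    by move: Ek; rewrite H // eqxx.
  move=> _; exists k; split => //.
    by move=> j Hj Hj'; move: Hj'; rewrite ltnS leqNgt Hj.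
  by move: Ek; case: (a k); case: (b k).
- move/negbFE/eqP: Ek => Ek; split.
    split.
      move/IH1 => Heq i; rewrite ltnS leq_eqVlt => /orP [/eqP -> //| /Heq //].
    move=> H; apply/IH1 => i Hi; apply: H; exact: ltnW.
  move=> /IH2 [i [Hi Hd Hb Hs]]; exists i; split => //; first exact: ltnW.
  move=> j Hj; rewrite ltnS leq_eqVlt => /orP [/eqP -> //| Hj']; exact: Hb.
Qed.

Lemma selL C' C n : is_max C' n -> is_max C n ->
  (le_last C' C <-> ~~ winN (stat updL s00 C' C n.+1)).
Proof.
move=> H1 H2; have Z1 := max_zero H1; have Z2 := max_zero H2.
have [S1 S2] := statL C' C n.+1.
have Dn i : C' i <> C i -> i < n.+1.
  move=> Hd; rewrite ltnS leqNgt; apply/negP => Hn; apply: Hd; by rewrite Z1 // Z2.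
rewrite /winN; split.
- case=> [Heq | [i [Hd Hb Hi]]].
    have -> : (stat updL s00 C' C n.+1).1 = false by apply/S1 => i _; exact: Heq.
    done.
  case E: (stat updL s00 C' C n.+1).1 => //=.
  have [i0 [Hi0 Hd0 Hb0 ->]] := S2 E.
  have Ei : i0 = i.
    case: (ltngtP i0 i) => // H; last by move: Hd0; rewrite Hb // eqxx.
    by exfalso; apply: (Hd); apply: Hb0 (Dn i Hd).
  subst; move: Hd Hi; by case: (C' i); case: (C i).
- case E: (stat updL s00 C' C n.+1).1 => /= H.
    have [i0 [Hi0 Hd0 Hb0 Hs]] := S2 E.
    right; exists i0; split; [exact/eqP | |].
      move=> j Hj; case: (leqP j n) => Hjn; first by apply: Hb0.
      by rewrite Z1 // Z2.
    rewrite Hs in H; move: Hd0 H; by case: (C' i0); case: (C i0).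
  left => i; case: (leqP i n) => Hin; first exact: (S1.1 E i Hin).
  by rewrite Z1 // Z2.
Qed.

Lemma ex_lt_S (P : nat -> bool) k :
  (exists i, i < k.+1 /\ P i) <-> (exists i, i < k /\ P i) \/ P k.
Proof.
split.
  move=> [i [Hi HP]]; move: Hi; rewrite ltnS leq_eqVlt => /orP [/eqP Ei|Hi].
    by subst; right.
  by left; exists i.
case=> [[i [Hi HP]]|HP]; [exists i; split=> //; exact: ltnW | by exists k].
Qed.

Lemma statM a b k :
  ((stat updM s00 a b k).1 <-> exists i, i < k /\ b i && ~~ a i) /\
  ((stat updM s00 a b k).2 <-> exists i, i < k /\ a i && ~~ b i).
Proof.
elim: k => [|k [IH1 IH2]] /=.
  by split; split=> // [[i []]].
rewrite /updM /=; split.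
  rewrite (ex_lt_S (fun i => b i && ~~ a i)); split.
    by case/orP => [/IH1|]; auto.
  by case=> [/IH1 ->|->] //; rewrite orbT.
rewrite (ex_lt_S (fun i => a i && ~~ b i)); split.
  by case/orP => [/IH2|]; auto.
by case=> [/IH2 ->|->] //; rewrite orbT.
Qed.

Lemma selM C' C n : is_max C' n -> is_max C n ->
  ((forall i, C i -> C' i) /\ (exists i, C' i /\ ~~ C i)) <-> winM (stat updM s00 C' C n.+1).
Proof.
move=> H1 H2; have Z1 := max_zero H1; have Z2 := max_zero H2.
have [S1 S2] := statM C' C n.+1.
rewrite /winM; split.
- move=> [Hs [i [Hi Hni]]]; apply/andP; split.
    apply/negP => /S1 [j [_ /andP [Hj Hnj]]]; by rewrite Hs in Hnj.
  apply/S2; exists i; split; last by rewrite Hi.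
  by rewrite ltnS; apply: H1.2.
- move=> /andP [Hn Hx]; split.
    move=> i Hi; case E: (C' i) => //; exfalso; move/negP: Hn; apply; apply/S1; exists i.
    split; [by rewrite ltnS; apply: H2.2 | by rewrite Hi E].
  move/S2: Hx => [i [_ /andP [Ha Hb]]]; by exists i.
Qed.


Section Strict.
Variable T : Type.
Variable A : CEA T.
Local Notation Q := (st A).
Definition St2 : finType := (Q * bool)%type.
Definition dls : list (St2 * (T -> bool) * bool * St2) :=
  flat_map (fun x : Q * (T -> bool) * bool * Q =>
    if x.1.2 then ((x.1.1.1, false), x.1.1.2, true, (x.2, true)) ::
                  ((x.1.1.1, true), x.1.1.2, true, (x.2, true)) :: nil
    else ((x.1.1.1, false), x.1.1.2, false, (x.2, false)) :: nil) (delta A).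

Lemma size_dls : size dls <= 2 * size (delta A).
Proof. rewrite mulnC; apply: size_flat_map => x; by case: ifP. Qed.

Lemma dls_In y : In y dls <-> exists p P m q, In (p, P, m, q) (delta A) /\
   (if m then exists c, y = ((p, c), P, true, (q, true)) else y = ((p, false), P, false, (q, false))).
Proof.
rewrite /dls; split.
  move=> /in_flat_map [[[[p P] m] q] [Hin Hy]].
  exists p, P, m, q; split=> //; move: Hy; case: m Hin => Hin /=.
    by case=> [<-|[<-|//]]; [exists false | exists true].
  by case=> [<-|//].
move=> [p [P [m [q [Hin Hy]]]]]; apply/in_flat_map; exists (p, P, m, q); split=> //=.
case: m Hy Hin => [[[] ->]|->] _ /=; tauto.
Qed.

Definition Init2 : {set St2} := [set x : St2 | (x.1 \in init A) && ~~ x.2].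
Definition Fin2 : {set St2} := [set x : St2 | (x.1 \in fin A) && x.2].
Definition Astr (l : list (St2 * (T -> bool) * bool * St2)) : CEA T := @MkCEA T St2 l Init2 Fin2.

Lemma Astr_sem l (Hl : forall x, In x l <-> In x dls) S C :
  sem (Astr l) S C <-> sem A S C /\ exists i j, forall k, C k <-> i <= k <= j.
Proof.
split.
- move=> [n [q' [P' [m' [[Hi Hr Hf] [Hmn HC]]]]]].
  have Hst i : i <= n -> [/\ In ((q' i).1, P' i, m' i, (q' i.+1).1) (delta A), P' i (S i),
      (q' i.+1).2 = m' i & (~~ m' i -> ~~ (q' i).2)].
    move=> Hin; have [Hin' HP] := Hr i Hin.
    move/Hl/dls_In: Hin' => [p [P [m [q [HinD Hc]]]]].
    case: m HinD Hc => HinD.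
      move=> [c [E1 E2 E3 E4]]; rewrite E1 E3 E4 /=; split=> //; by rewrite E2.
    move=> [E1 E2 E3 E4]; rewrite E1 E3 E4 /=; split=> //; by rewrite E2.
  move: Hi Hf; rewrite !inE => /andP [Hi1 Hi2] /andP [Hf1 Hf2].
  split.
    exists n, (fun i => (q' i).1), P', m'; split=> //; split=> // i Hin.
    by have [] := Hst i Hin.
  have Hex : exists k, (k <= n) && m' k by exists n; rewrite leqnn Hmn.
  case: (ex_minnP Hex) => i0 /andP [Hi0n Hmi0] Hmin.
  have Hall d : i0 + d <= n -> m' (i0 + d).
    elim: d => [|d IH]; first by rewrite addn0.
    move=> Hd; have Hd' : i0 + d <= n by apply: leq_trans Hd; rewrite leq_add2l.
    have [_ _ E1 _] := Hst _ Hd'.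
    have [_ _ _ E2] := Hst _ Hd.
    rewrite addnS in E2 Hd *; apply/negPn/negP => Hn; move: (E2 Hn); by rewrite E1 IH.
  exists i0, n => k; rewrite HC; split.
    move=> /andP [Hk Hm]; rewrite Hk andbT; apply: Hmin; by rewrite Hk.
  move=> /andP [Hk1 Hk2]; rewrite Hk2 -(subnKC Hk1); apply: Hall; by rewrite subnKC.
- move=> [[n [qA [PA [mA [[Hi Hr Hf] [Hmn HC]]]]]] [i [j Hij]]].
  have Hn : i <= n <= j by apply/Hij; rewrite HC leqnn Hmn.
  move/andP: Hn => [Hin Hnj].
  have Hm k : k <= n -> mA k = (i <= k).
    move=> Hk; apply/idP/idP.
      by move=> Hm; have /Hij/andP [] : C k by rewrite HC Hk Hm.
    move=> Hik; have : C k by apply/Hij; rewrite Hik (leq_trans Hk Hnj).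
    by rewrite HC Hk.
  exists n, (fun k => (qA k, i < k)), PA, mA; split; last by split.
  split.
  + by rewrite inE Hi.
  + move=> k Hk; have [Hin' HP] := Hr k Hk; split=> //.
    apply/Hl/dls_In; exists (qA k), (PA k), (mA k), (qA k.+1); split=> //.
    rewrite Hm // ltnS; case: ifP => Hik.
      by exists (i < k); rewrite Hik.
    by rewrite ltn_neqAle Hik andbF.
  + by rewrite inE Hf /= ltnS.
Qed.
End Strict.

Lemma bound_arith q N :
  q * 2 * 2 ^ (q * 4 * 2) + q * 2 * 2 ^ (q * 4 * 2) * N * 2 ^ N <= 2 ^ (10 * (q + N)).
Proof.
case: q => [|q]; first by rewrite !mul0n.
set X := q.+1 * 2 * 2 ^ (q.+1 * 4 * 2).
have HX : X <= 2 ^ (9 * q.+1 + 1).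
  have E : 9 * q.+1 + 1 = q.+1 + 1 + q.+1 * 4 * 2 by lia.
  rewrite E !expnD expn1 /X.
  apply: leq_mul => //; apply: leq_mul => //; apply: ltnW; exact: ltn_expl.
have HN : 1 + N * 2 ^ N <= 2 ^ (2 * N).
  have E : 2 * N = N + N by lia.
  rewrite E expnD.
  apply: (@leq_trans ((N.+1) * 2 ^ N)).
    by rewrite mulSn leq_add2r expn_gt0.
  apply: leq_mul => //; exact: ltn_expl.
have -> : X + X * N * 2 ^ N = X * (1 + N * 2 ^ N) by rewrite -mulnA mulnDr muln1.
apply: (@leq_trans (2 ^ (9 * q.+1 + 1) * 2 ^ (2 * N))); first exact: leq_mul.
rewrite -expnD leq_exp2l //; lia.
Qed.


Lemma card_St' T (A : CEA T) : #|St' A| = #|st A| * 2 * 2 ^ (#|st A| * 4 * 2).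
Proof.
have -> : #|St' A| = #|{: (st A * bool) * {set Elem A}}| by [].
rewrite card_prod card_prod card_setT card_bool.
have -> : #|Elem A| = #|{: (st A * (bool * bool)) * bool}| by [].
by rewrite !card_prod !card_bool.
Qed.

Lemma gen_ex T (U : (T -> bool) -> Prop) (A : CEA T) upd s0 win :
  pred_class_ok U -> wf_cea U A ->
  exists l, [/\ wf_cea U (Agen (A:=A) s0 win l),
    (forall S C, sem (Agen (A:=A) s0 win l) S C <-> sem A S C /\
       ~ (exists C' n, [/\ sem A S C', is_max C' n, is_max C n & win (stat upd s0 C' C n.+1)]))
  & cea_size (Agen (A:=A) s0 win l) <= 2 ^ (10 * cea_size A)].
Proof.
move=> HU HA.
have [l [Hnd [Hl Hsz]]] := dedup_ex (dl A upd).
exists l; split.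
- split=> // q P m q' /Hl/dl_In [s [k [al [_ _ Heq]]]].
  case: Heq => _ -> _ _; exact: mtU.
- move=> S C; exact: Agen_sem.
- rewrite /cea_size /=.
  apply: leq_trans (bound_arith #|st A| (size (delta A))).
  rewrite -card_St'; apply: leq_add => //.
  exact: leq_trans Hsz (size_dl A upd).
Qed.

Theorem theorem4 :
  exists c : nat,
  forall (T : Type) (U : (T -> bool) -> Prop),
  pred_class_ok U ->
  forall (A : CEA T), wf_cea U A ->
  forall sel : selection,
  exists A' : CEA T,
    [/\ wf_cea U A',
        (forall (S : stream T) (C : cevent), sem A' S C <-> sel_sem sel A S C) &
        (if sel is STRICT
         then #|st A'| <= 2 * #|st A| /\ size (delta A') <= 2 * size (delta A)
         else cea_size A' <= 2 ^ (c * cea_size A))].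
Proof.
exists 10 => T U HU A HA sel.
case: sel.
- have [l [Hnd [Hl Hsz]]] := dedup_ex (dls A).
  exists (Astr l); split.
  + split=> // q P m q' /Hl/dls_In [p [P0 [m0 [q0 [Hin Hy]]]]].
    have -> : P = P0.
      case: m0 Hy Hin => [[c Hy]|Hy] _; by case: Hy.
    exact: (HA.2 _ _ _ _ Hin).
  + move=> S C; exact: Astr_sem Hl S C.
  + split; first by rewrite /= /St2 card_prod card_bool mulnC.
    exact: leq_trans Hsz (size_dls A).
- have [l [Hw Hs Hz]] := gen_ex updN s00 winN HU HA.
  exists (Agen (A:=A) s00 winN l); split => // S C.
  apply: iff_trans (Hs S C) _.
  rewrite /sel_sem; split => [[H0 Hn]|[H0 Hn]]; split => //.
    move=> C' n H1 H2 H3; apply/(selN H2 H3); apply/negP => Hw'; apply: Hn; by exists C', n.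
  move=> [C' [n [H1 H2 H3 Hw']]]; move: (Hn C' n H1 H2 H3); move/(selN H2 H3); by rewrite Hw'.
- have [l [Hw Hs Hz]] := gen_ex updL s00 winN HU HA.
  exists (Agen (A:=A) s00 winN l); split => // S C.
  apply: iff_trans (Hs S C) _.
  rewrite /sel_sem; split => [[H0 Hn]|[H0 Hn]]; split => //.
    move=> C' n H1 H2 H3; apply/(selL H2 H3); apply/negP => Hw'; apply: Hn; by exists C', n.
  move=> [C' [n [H1 H2 H3 Hw']]]; move: (Hn C' n H1 H2 H3); move/(selL H2 H3); by rewrite Hw'.
- have [l [Hw Hs Hz]] := gen_ex updM s00 winM HU HA.
  exists (Agen (A:=A) s00 winM l); split => // S C.
  apply: iff_trans (Hs S C) _.
  rewrite /sel_sem; split => [[H0 Hn]|[H0 Hn]]; split => //.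
    move=> [C' [n [H1 H2 H3 Hs1 Hs2]]]; apply: Hn; exists C', n; split => //.
    by apply/(selM H2 H3).
  move=> [C' [n [H1 H2 H3 Hw']]]; apply: Hn; exists C', n.
  have [Ha Hb] := (selM H2 H3).2 Hw'; by split.
Qed.
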